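(* Let $\mathbf{K}$ be an algebraically closed field and let $f,g\in\mathrm{Aut}(\mathbb G_m^2)$ be two loxodromic automorphisms of the algebraic torus $\mathbb G_m^2$ over $\mathbf{K}$. Then $\mathrm{Per}(f)\cap\mathrm{Per}(g)\neq\emptyset$ if and only if $\mathrm{Per}(f)=\mathrm{Per}(g)$.
   Context: Every $\mathbf{K}$-automorphism of $\mathbb G_m^2$ has the form $(x,y)\mapsto(\alpha x^ay^b,\beta x^cy^d)$ with $\alpha,\beta\in\mathbf{K}^\times$ and $\begin{pmatrix}a&b\\c&d\end{pmatrix}\in\mathrm{GL}_2(\mathbf Z)$. An automorphism is loxodromic if its first dynamical degree $\lambda_1(f)=\lim_N((f^N)^*H\cdot H)^{1/N}$ (for $H$ ample on a projective completion) is $>1$. $\mathrm{Per}(f)$ is the set of periodic points of $f$. *)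

(* Defs.v *)
From Stdlib Require Import Reals.
From Coquelicot Require Import Rbar Lim_seq.
From HB Require Import structures.
From mathcomp Require Import all_boot all_order all_algebra.

Set Implicit Arguments.
Unset Strict Implicit.
Unset Printing Implicit Defensive.

Import GRing.Theory.
Local Open Scope ring_scope.

Definition in_torus (K : fieldType) (p : K * K) : Prop := p.1 != 0 /\ p.2 != 0.

(* An automorphism (x,y) |-> (alpha x^a y^b, beta x^c y^d) of G_m^2,
   with alpha, beta in K^x and [[a,b],[c,d]] in GL_2(Z). *)
Record torus_aut (K : fieldType) := TorusAut {
  ta_alpha : K;
  ta_beta : K;
  ta_mat : 'M[int]_2;
  ta_alpha_neq0 : ta_alpha != 0;
  ta_beta_neq0 : ta_beta != 0;
  ta_mat_GL : ta_mat \in unitmx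
}.

Definition ta_fun (K : fieldType) (f : torus_aut K) (p : K * K) : K * K :=
  let M := ta_mat f in
  (ta_alpha f * p.1 ^ (M 0 0) * p.2 ^ (M 0 1),
   ta_beta f * p.1 ^ (M 1 0) * p.2 ^ (M 1 1)).

Definition Per (K : fieldType) (f : torus_aut K) (p : K * K) : Prop :=
  in_torus p /\ exists n : nat, (0 < n)%N /\ iter n (ta_fun f) p = p.

(* Degree of f^N with respect to the ample class H = O(1,1) on the projective
   completion P^1 x P^1 of G_m^2:  (f^N)^* H . H.  The iterate f^N is again
   monomial with exponent matrix M^N, and for a monomial map with exponent
   matrix [[a,b],[c,d]] one has f^* H = O(|a|+|c|, |b|+|d|), so
   f^* H . H = |a| + |b| + |c| + |d|. *)
Definition deg_iter (K : fieldType) (f : torus_aut K) (N : nat) : nat :=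
  let A := (ta_mat f) ^+ N in
  addn (addn (addn (absz (A 0 0)) (absz (A 0 1))) (absz (A 1 0))) (absz (A 1 1)).

Definition lambda1 (K : fieldType) (f : torus_aut K) : Rbar :=
  Lim_seq (fun N : nat => Rpower (INR (deg_iter f N)) (Rinv (INR N))).

Definition loxodromic (K : fieldType) (f : torus_aut K) : Prop :=
  Rbar_lt (Rbar.Finite R1) (lambda1 f).

(* Main.v *)
Require Import Defs.
From Stdlib Require Import Reals Lra Lia.
From Coquelicot Require Import Coquelicot.
From mathcomp Require Import all_boot all_order all_algebra.

Section RealPart.
Local Open Scope R_scope.

Lemma ln0 : ln 0 = 0.
Proof. unfold ln; destruct (Rlt_dec 0 0) as [r|r]; [exfalso; exact (Rlt_irrefl 0 r) | reflexivity]. Qed.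

Lemma exp_le' x y : x <= y -> exp x <= exp y.
Proof.
intros h; destruct (Rle_lt_or_eq_dec _ _ h) as [h'|h'].
- left; apply exp_increasing; exact h'.
- rewrite h'; right; reflexivity.
Qed.

Lemma lim_bound (d : nat -> nat) (Sb : nat) :
  (forall m, (0 < m)%coq_nat -> (d m <= Sb * m)%coq_nat) ->
  Rbar_le (Lim_seq (fun N => Rpower (INR (d N)) (/ INR N))) 1.
Proof.
intros hd.
set (D := INR Sb + 1).
assert (hD : 1 <= D) by (unfold D; pose proof (pos_INR Sb); lra).
set (v := fun N : nat => exp (/ INR N * ln D + ln (INR N) / INR N)).
assert (hlim : is_lim_seq v 1).
{ rewrite <- exp_0. unfold v.
  apply is_lim_seq_continuous.
  { apply derivable_continuous_pt, derivable_pt_exp. }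
  assert (A : is_lim_seq (fun N => / INR N * ln D) 0).
  { pose proof (is_lim_seq_scal_r (fun N => / INR N) (ln D) 0) as A.
    simpl in A. rewrite Rmult_0_l in A. apply A.
    change (Rbar.Finite 0) with (Rbar_inv p_infty).
    apply is_lim_seq_inv; [apply is_lim_seq_INR | discriminate]. }
  assert (B : is_lim_seq (fun N => ln (INR N) / INR N) 0).
  { apply (is_lim_comp_seq (fun y => ln y / y) INR p_infty 0).
    + apply is_lim_div_ln_p.
    + exists 0%nat; intros n _; discriminate.
    + apply is_lim_seq_INR. }
  pose proof (is_lim_seq_plus' _ _ _ _ A B) as C.
  rewrite Rplus_0_l in C. exact C. }
rewrite <- (is_lim_seq_unique v 1 hlim).
apply Lim_seq_le_loc.
exists 1%nat; intros N hN.
assert (hN' : 0 < INR N) by (apply lt_0_INR; lia).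
unfold Rpower, v.
apply exp_le'.
assert (e : / INR N * ln D + ln (INR N) / INR N = / INR N * ln (D * INR N)).
{ rewrite ln_mult; [unfold Rdiv; ring | lra | lra]. }
rewrite e.
apply Rmult_le_compat_l; [left; apply Rinv_0_lt_compat; exact hN' |].
assert (h1 : 1 <= D * INR N).
{ assert (1 <= INR N) by (apply (le_INR 1); lia). nra. }
destruct (d N) as [|k] eqn:ek.
- simpl INR. rewrite ln0. rewrite <- ln_1. apply ln_le; lra.
- apply ln_le; [apply lt_0_INR; lia |].
  assert (hk : (S k <= Sb * N)%coq_nat) by (rewrite <- ek; apply hd; lia).
  apply le_INR in hk. rewrite mult_INR in hk.
  assert (0 <= INR Sb) by apply pos_INR. unfold D. nra.
Qed.
End RealPart.

From mathcomp Require Import ring lra zify.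
Set Implicit Arguments. Unset Strict Implicit. Unset Printing Implicit Defensive.
Import GRing.Theory Num.Theory.
Local Open Scope ring_scope.


Lemma ord2_0 : (ord0 : 'I_2) = 0. Proof. exact/val_inj. Qed.
Lemma ord2_1 : (lift ord0 (ord0 : 'I_1)) = (1 : 'I_2). Proof. exact/val_inj. Qed.

Lemma mx2mulE (A B : 'M[int]_2) i j : (A * B) i j = A i 0 * B 0 j + A i 1 * B 1 j.
Proof. by rewrite -mulmxE mxE !big_ord_recl big_ord0 addr0 ord2_1 ord2_0. Qed.

Lemma ord2P (P : 'I_2 -> Prop) : P 0 -> P 1 -> forall i, P i.
Proof.
move=> h0 h1 [[|[|//]] Hi].
- by have -> : Ordinal Hi = 0 by apply/val_inj.
- by have -> : Ordinal Hi = 1 by apply/val_inj.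
Qed.

Lemma mx2_eq (A B : 'M[int]_2) : A 0 0 = B 0 0 -> A 0 1 = B 0 1 -> A 1 0 = B 1 0 -> A 1 1 = B 1 1 -> A = B.
Proof.
move=> h1 h2 h3 h4; apply/matrixP => i j.
by elim/ord2P: i; elim/ord2P: j.
Qed.

Lemma mx2addE (A B : 'M[int]_2) i j : (A + B) i j = A i j + B i j.
Proof. by rewrite mxE. Qed.
Lemma mx2oneE i j : (1 : 'M[int]_2) i j = (i == j)%:R.
Proof. by rewrite mxE. Qed.
Lemma mx2scalE (k : int) i j : (k%:M : 'M[int]_2) i j = k *+ (i == j).
Proof. by rewrite mxE. Qed.
Lemma mx2oppE (A : 'M[int]_2) i j : (- A) i j = - A i j.
Proof. by rewrite mxE. Qed.


Definition dt (A : 'M[int]_2) : int := A 0 0 * A 1 1 - A 0 1 * A 1 0.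
Lemma dtM A B : dt (A * B) = dt A * dt B.
Proof. rewrite /dt !mx2mulE; ring. Qed.
Lemma dt1 : dt 1 = 1. Proof. by rewrite /dt !mx2oneE. Qed.
Lemma dt_unit A : A \in unitmx -> dt A = 1 \/ dt A = -1.
Proof.
move=> /mulmxV; rewrite mulmxE => /(congr1 dt); rewrite dtM.
have -> : (1%:M : 'M[int]_2) = 1 by [].
rewrite dt1 => h.
have : (absz (dt A) * absz (dt (invmx A)))%N = 1%N by rewrite -abszM h.
move/eqP; rewrite muln_eq1 => /andP[/eqP hx _]. lia.
Qed.

Section Tor.
Variable K : fieldType.
Definition pmul (p q : K * K) := (p.1 * q.1, p.2 * q.2).
Definition mon (A : 'M[int]_2) (p : K * K) : K * K :=
  (p.1 ^ A 0 0 * p.2 ^ A 0 1, p.1 ^ A 1 0 * p.2 ^ A 1 1).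

Lemma mon_tor A p : in_torus p -> in_torus (mon A p).
Proof. by case=> h1 h2; split; rewrite /= mulf_neq0 // expfz_neq0. Qed.

Lemma pmul_tor p q : in_torus p -> in_torus q -> in_torus (pmul p q).
Proof. by case=> h1 h2 [h3 h4]; split; rewrite /= mulf_neq0. Qed.

Lemma mon_mul A B p : in_torus p -> mon A (mon B p) = mon (A * B) p.
Proof.
case: p => p1 p2 [/= h1 h2]; rewrite /mon /= !mx2mulE !expfzMl !exprz_exp !expfzDr //.
rewrite !(mulrC (B _ _)); congr (_, _); ring.
Qed.

Lemma mon_add A B p : in_torus p -> mon (A + B) p = pmul (mon A p) (mon B p).
Proof.
case: p => p1 p2 [/= h1 h2]; rewrite /mon /pmul /= !mx2addE !expfzDr //.
congr (_, _); ring.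
Qed.

Lemma mon_pmul A p q : mon A (pmul p q) = pmul (mon A p) (mon A q).
Proof. rewrite /mon /pmul /= !expfzMl; congr (_, _); ring. Qed.

Lemma mon1 p : mon 1 p = p.
Proof. by case: p => p1 p2; rewrite /mon /= !mx2oneE /= expr1z expr0z mulr1 mul1r. Qed.

Lemma mon_scal k p : mon (k%:M) p = (p.1 ^ k, p.2 ^ k).
Proof. by case: p => p1 p2; rewrite /mon /= !mx2scalE /= !mulr1n !mulr0n expr0z mulr1 mul1r. Qed.

Lemma mon_one A : mon A (1, 1) = (1, 1).
Proof. by rewrite /mon /= !exp1rz mulr1. Qed.
End Tor.


Definition adj2 (A : 'M[int]_2) : 'M[int]_2 :=
  \matrix_(i, j) (if i == 0 then (if j == 0 then A 1 1 else - A 0 1)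
                  else (if j == 0 then - A 1 0 else A 0 0)).

Lemma adj2_mulr A : A * adj2 A = (dt A)%:M.
Proof. apply: mx2_eq; rewrite !mx2mulE !mxE /= /dt; ring. Qed.
Lemma adj2_mull A : adj2 A * A = (dt A)%:M.
Proof. apply: mx2_eq; rewrite !mx2mulE !mxE /= /dt; ring. Qed.

Section Tor.
Variable K : fieldType.

Lemma pmulA (p q r : K * K) : pmul p (pmul q r) = pmul (pmul p q) r.
Proof. by rewrite /pmul /= !mulrA. Qed.
Lemma pmul1 (p : K * K) : pmul (1, 1) p = p.
Proof. by case: p => a b; rewrite /pmul /= !mul1r. Qed.

Lemma ta_funE (f : torus_aut K) p : ta_fun f p = pmul (ta_alpha f, ta_beta f) (mon (ta_mat f) p).
Proof. by rewrite /ta_fun /pmul /mon /= !mulrA. Qed.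

Lemma ab_tor (f : torus_aut K) : in_torus (ta_alpha f, ta_beta f).
Proof. by split; [exact: ta_alpha_neq0 | exact: ta_beta_neq0]. Qed.

Lemma ta_tor (f : torus_aut K) p : in_torus p -> in_torus (ta_fun f p).
Proof. by move=> h; rewrite ta_funE; apply: pmul_tor; [apply: ab_tor | apply: mon_tor]. Qed.

Lemma iter_tor (f : torus_aut K) n p : in_torus p -> in_torus (iter n (ta_fun f) p).
Proof. by move=> h; elim: n => //= n IH; apply: ta_tor. Qed.

Lemma iterE (f : torus_aut K) n : exists c, in_torus c /\
  forall p, in_torus p -> iter n (ta_fun f) p = pmul c (mon (ta_mat f ^+ n) p).
Proof.
elim: n => [|n [c [hc IH]]].
  by exists (1, 1); split; [split; apply: oner_neq0 | move=> p _; rewrite expr0 mon1 pmul1].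
exists (pmul (ta_alpha f, ta_beta f) (mon (ta_mat f) c)); split.
  by apply: pmul_tor; [apply: ab_tor | apply: mon_tor].
move=> p hp; rewrite iterS IH // ta_funE mon_pmul mon_mul ?exprS ?pmulA //.
Qed.

Lemma pmul_cancel (p q z : K * K) : in_torus z -> pmul p z = pmul q z -> p = q.
Proof.
case: p q z => [a b] [c d] [z1 z2] [/= h1 h2]; rewrite /pmul /= => [[e1 e2]].
by rewrite (mulIf h1 e1) (mulIf h2 e2).
Qed.

Lemma fixed_torsion B (z : K * K) : in_torus z -> mon B z = z ->
  z.1 ^ dt (B - 1) = 1 /\ z.2 ^ dt (B - 1) = 1.
Proof.
move=> hz hB; set A := B - 1.
have eB : B = A + 1 by rewrite /A subrK.
have hA : mon A z = (1, 1).
  apply: (@pmul_cancel _ _ z hz); rewrite pmul1 -{3}hB eB mon_add // mon1 //.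
have := mon_mul (adj2 A) A hz; rewrite hA mon_one adj2_mull mon_scal.
by case=> <- <-.
Qed.
End Tor.

Section Closed.
Variable K : closedFieldType.

Lemma nat_root (n : nat) (c : K) : (0 < n)%N -> exists x : K, x ^+ n = c.
Proof.
move=> hn; have [x hx] := @solve_monicpoly K n (fun i => if i == 0%N then c else 0) hn.
exists x; rewrite hx; case: n hn {hx} => // n _.
rewrite big_ord_recl /= expr0 mulr1 big1 ?addr0 // => i _.
by rewrite /= mul0r.
Qed.

Lemma int_root (D : int) (c : K) : D != 0 -> c != 0 -> exists y : K, y != 0 /\ y ^ D = c.
Proof.
case: D => [n|n] hD hc.
  have [|x hx] := @nat_root n c; first by case: n hD.
  exists x; split => //; apply: contra_neq hc => x0; rewrite -hx x0 expr0n; case: n hD {hx} => //.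
have [|x hx] := @nat_root n.+1 c^-1 => //.
exists x; split.
  apply: contra_neq hc => x0; move: hx; rewrite x0 expr0n /= => /esym /eqP.
  by rewrite invr_eq0 => /eqP.
by rewrite /exprz hx invrK.
Qed.

Lemma fixed_exists (f : torus_aut K) : dt (ta_mat f - 1) != 0 ->
  exists p, in_torus p /\ ta_fun f p = p.
Proof.
move=> hD; set A := ta_mat f - 1.
have [y1 [hy1 e1]] := int_root hD (invr_neq0 (ta_alpha_neq0 f)).
have [y2 [hy2 e2]] := int_root hD (invr_neq0 (ta_beta_neq0 f)).
have hy : in_torus (y1, y2) by split.
exists (mon (adj2 A) (y1, y2)); split; first exact: mon_tor.
have eM : ta_mat f = A + 1 by rewrite /A subrK.
rewrite ta_funE mon_mul // {1}eM mulrDl mul1r adj2_mulr mon_add // mon_scal /= e1 e2 pmulA.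
by rewrite /pmul /= !mulfV ?ta_alpha_neq0 ?ta_beta_neq0 // !mul1r.
Qed.
End Closed.


Lemma iter_mul_fix (T : Type) (h : T -> T) n k x : iter n h x = x -> iter (n * k) h x = x.
Proof.
move=> hx; elim: k => [|k IH]; first by rewrite muln0.
by rewrite mulnS iterD IH hx.
Qed.

Section Tor.
Variable K : fieldType.

Definition tors (z : K * K) := exists m : nat, (0 < m)%N /\ z.1 ^+ m = 1 /\ z.2 ^+ m = 1.

Lemma int_tors (x : K) (D : int) : x ^ D = 1 -> x ^+ (absz D) = 1.
Proof.
case: D => n //= h; apply/eqP; rewrite -invr_eq1; apply/eqP; exact: h.
Qed.

Lemma pmulC (p q : K * K) : pmul p q = pmul q p.
Proof. by rewrite /pmul mulrC [p.2 * _]mulrC. Qed.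

Definition pquo (q p : K * K) : K * K := (q.1 / p.1, q.2 / p.2).

Lemma pmul_div p q : in_torus p -> pmul p (pquo q p) = q.
Proof. by case: p q => a b [c d] [/= ha hb]; rewrite /pmul /pquo /= [a * _]mulrC [b * _]mulrC !divfK. Qed.

Lemma pquo_tor p q : in_torus p -> in_torus q -> in_torus (pquo q p).
Proof. by case=> h1 h2 [h3 h4]; split; rewrite /= mulf_neq0 // invr_eq0. Qed.

Lemma per_tors (f : torus_aut K) p q :
  (forall N, (0 < N)%N -> dt (ta_mat f ^+ N - 1) != 0) ->
  Per f p -> Per f q -> tors (pquo q p).
Proof.
move=> HD [hp [n [hn0 hn]]] [hq [m [hm0 hm]]].
set N := (n * m)%N.
have hNp : iter N (ta_fun f) p = p by exact: iter_mul_fix.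
have hNq : iter N (ta_fun f) q = q by rewrite /N mulnC; exact: iter_mul_fix.
have [c [hc hit]] := iterE f N.
set z := pquo q p.
have hz : in_torus z by exact: pquo_tor.
have eq : q = pmul p z by rewrite pmul_div.
have hB : mon (ta_mat f ^+ N) z = z.
  apply: (@pmul_cancel _ _ _ p hp); rewrite ![pmul _ p]pmulC -eq.
  rewrite -{1}hNq hit // {1}eq mon_pmul pmulA -hit //.
  by rewrite hNp.
have [h1 h2] := fixed_torsion hz hB.
have hN0 : (0 < N)%N by rewrite /N muln_gt0 hn0.
exists (absz (dt (ta_mat f ^+ N - 1))); split; first by rewrite absz_gt0 HD.
by split; apply: int_tors.
Qed.

Lemma expz_mod (x : K) (m : nat) (a b : int) : x != 0 -> x ^+ m = 1 ->
  (a %% m)%Z = (b %% m)%Z -> x ^ a = x ^ b.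
Proof.
move=> hx hm hab.
have E c : x ^ ((c %/ m)%Z * m) = 1.
  by rewrite mulrC -exprz_exp; have -> : x ^ (m%:Z) = x ^+ m by []; rewrite hm exp1rz.
have F c : x ^ c = x ^ (c %% m)%Z by rewrite {1}(divz_eq c m) expfzDr // E mul1r.
by rewrite F hab -F.
Qed.
End Tor.


Section Tor.
Variable K : fieldType.

Lemma mon_inj (U : 'M[int]_2) (x y : K * K) : U \is a GRing.unit -> in_torus x -> in_torus y ->
  mon U x = mon U y -> x = y.
Proof.
move=> hU hx hy e.
by rewrite -(mon1 x) -(mon1 y) -(mulVr hU) -!mon_mul // e.
Qed.

Lemma ltm (m : nat) (a : int) : (0 < m)%N -> (absz (a %% m)%Z < m)%N.
Proof.
move=> hm; rewrite -ltz_nat gez0_abs ?modz_ge0 ?ltz_pmod //; lia.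
Qed.

Lemma tors_cycle (B : 'M[int]_2) (z : K * K) : B \is a GRing.unit -> in_torus z -> tors z ->
  exists k, (0 < k)%N /\ mon (B ^+ k) z = z.
Proof.
move=> hB hz [m [hm [hz1 hz2]]].
pose g (k : 'I_(m ^ 4).+1) : {ffun 'I_2 * 'I_2 -> 'I_m} :=
  [ffun ij => Ordinal (ltm ((B ^+ k) ij.1 ij.2) hm)].
have : ~~ injectiveb g.
  apply/negP => /injectiveP /leq_card.
  by rewrite card_ffun card_prod !card_ord ltnn.
case/injectivePn => i [j hij hg].
have key (a b : 'I_2) : ((B ^+ i) a b %% m)%Z = ((B ^+ j) a b %% m)%Z.
  move: hg => /ffunP /(_ (a, b)); rewrite !ffunE => /(congr1 val) /= e.
  by rewrite -(gez0_abs (modz_ge0 _ _)) ?e ?gez0_abs ?modz_ge0 //; lia.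
have [z1 z2] := hz.
have emon : mon (B ^+ i) z = mon (B ^+ j) z.
  rewrite /mon; by congr (_ * _, _ * _); apply: (@expz_mod _ _ m); rewrite ?key.
wlog lij : i j hij hg key emon / (i < j)%N.
  move=> H; case: (ltngtP i j) => h.
  - exact: (H i j).
  - apply: (H j i); [by rewrite eq_sym | by rewrite hg | by move=> a b; rewrite key | by rewrite emon | by []].
  - by move: hij; rewrite (val_inj h) eqxx.
exists (j - i)%N; split; first by rewrite subn_gt0.
apply: (@mon_inj (B ^+ i)).
- exact: (unitrX i hB).
- exact: mon_tor.
- by [].
- rewrite mon_mul //. rewrite -exprD. rewrite (subnKC (ltnW lij)). exact: esym emon.
Qed. End Tor.


Section Tor.
Variable K : fieldType.

Lemma mat_unit (f : torus_aut K) : ta_mat f \is a GRing.unit.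
Proof. exact: ta_mat_GL. Qed.

Lemma tors_per (f : torus_aut K) p z : Per f p -> in_torus z -> tors z -> Per f (pmul p z).
Proof.
move=> [hp [n [hn0 hn]]] hz tz.
have [k [hk ek]] := tors_cycle (unitrX n (mat_unit f)) hz tz.
split; first exact: pmul_tor.
exists (n * k)%N; split; first by rewrite muln_gt0 hn0.
have [c [hc hit]] := iterE f (n * k).
rewrite hit; last exact: pmul_tor. rewrite (mon_pmul (ta_mat f ^+ (n*k)) p z) pmulA -(hit p hp) iter_mul_fix //.
by rewrite exprM ek.
Qed.

Lemma per_iff (f : torus_aut K) p :
  (forall N, (0 < N)%N -> dt (ta_mat f ^+ N - 1) != 0) ->
  Per f p -> forall q, Per f q <-> (in_torus q /\ tors (pquo q p)).
Proof.
move=> HD hp q; split.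
  by move=> hq; split; [case: hq | exact: per_tors hp hq].
case=> hq tq; rewrite -(pmul_div q (proj1 hp)); apply: tors_per => //.
exact: pquo_tor (proj1 hp) hq.
Qed.
End Tor.

Theorem main_alg (K : closedFieldType) (f g : torus_aut K) :
  (forall N, (0 < N)%N -> dt (ta_mat f ^+ N - 1) != 0) ->
  (forall N, (0 < N)%N -> dt (ta_mat g ^+ N - 1) != 0) ->
  ((exists p : K * K, Per f p /\ Per g p) <-> (forall p : K * K, Per f p <-> Per g p)).
Proof.
move=> Hf Hg; split.
  move=> [p [pf pg]] q.
  by rewrite (per_iff Hf pf) (per_iff Hg pg).
move=> H.
have hf1 : dt (ta_mat f - 1) != 0 by rewrite -[ta_mat f]expr1; exact: Hf.
have [p [hp fp]] := fixed_exists hf1.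
have pf : Per f p by split => //; exists 1%N.
by exists p; split => //; rewrite -H.
Qed.


Lemma dt_sub1 (B : 'M[int]_2) : dt (B - 1) = dt B - (B 0 0 + B 1 1) + 1.
Proof. rewrite /dt !mxE /=. ring. Qed.

Lemma sub1E (B : 'M[int]_2) i j : (B - 1) i j = B i j - (i == j)%:R.
Proof. by rewrite !mxE. Qed.

Lemma unipotent_pow (E : 'M[int]_2) q : E * E = 0 -> (1 + E) ^+ q = 1 + E *+ q.
Proof.
move=> hE; elim: q => [|q IH]; first by rewrite expr0 mulr0n addr0.
rewrite exprSr IH mulrDl mul1r mulrDr mulr1 mulrnAl hE mul0rn addr0.
by rewrite mulrS -addrA [E + _]addrC.
Qed.

Lemma unip_exists (B : 'M[int]_2) : B \in unitmx -> dt (B - 1) = 0 ->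
  exists2 k, (0 < k)%N & exists E, B ^+ k = 1 + E /\ E * E = 0.
Proof.
move=> hB; rewrite dt_sub1; case: (dt_unit hB) => hd; rewrite hd => h.
- exists 1%N => //; exists (B - 1); split; first by rewrite expr1 addrC subrK.
  have e11 : B 1 1 = 2 - B 0 0 by lia.
  move: hd; rewrite /dt e11 => hd.
  apply: mx2_eq; rewrite !mx2mulE !sub1E /= !mxE /= ?e11; lia.
- exists 2%N => //; exists 0; rewrite addr0 mulr0; split => //.
  have e11 : B 1 1 = - B 0 0 by lia.
  move: hd; rewrite /dt e11 => hd.
  rewrite expr2; apply: mx2_eq; rewrite !mx2mulE !mxE /= ?e11; lia.
Qed.

Definition nn (A : 'M[int]_2) : nat :=
  addn (addn (addn (absz (A 0 0)) (absz (A 0 1))) (absz (A 1 0))) (absz (A 1 1)).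

Lemma nn_bound (X Y : 'M[int]_2) q : (nn (X + Y *+ q) <= nn X + nn Y * q)%N.
Proof.
have ab (x y : int) : (absz (x + y *+ q)%R <= absz x + absz y * q)%N.
  have -> : y *+ q = y * q%:Z by rewrite -mulr_natr natz.
  have -> : (absz y * q)%N = absz (y * q%:Z) by rewrite abszM.
  move: (y * q%:Z) => w; lia.
rewrite /nn !mxE !mulmxnE !mulnDl.
apply: leq_trans (leq_add (leq_add (leq_add (ab (X 0 0) (Y 0 0)) (ab (X 0 1) (Y 0 1))) (ab (X 1 0) (Y 1 0))) (ab (X 1 1) (Y 1 1))) _.
lia.
Qed.

Lemma pow_bound (M E : 'M[int]_2) L : (0 < L)%N -> M ^+ L = 1 + E -> E * E = 0 ->
  forall m, (0 < m)%N ->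
  (nn (M ^+ m) <= (2 * \sum_(r < L) (nn (M ^+ r) + nn (E * M ^+ r))) * m)%N.
Proof.
move=> hL hM hE m hm.
set T := \sum_(r < L) _.
have hr : (m %% L < L)%N by rewrite ltn_pmod.
have hT : (nn (M ^+ (m %% L)) + nn (E * M ^+ (m %% L)) <= T)%N.
  by rewrite /T (bigD1 (Ordinal hr)) //= leq_addr.
have eM : M ^+ m = M ^+ (m %% L) + (E * M ^+ (m %% L)) *+ (m %/ L).
  rewrite {1}(divn_eq m L) exprD mulnC exprM hM unipotent_pow //.
  by rewrite mulrDl mul1r mulrnAl.
have hq : (m %/ L <= m)%N by apply: leq_div.
rewrite eM; apply: (leq_trans (nn_bound _ _ _)).
apply: (@leq_trans (T + T * (m %/ L))).
  by apply: leq_add; [apply: leq_trans hT; apply: leq_addr | apply: leq_mul => //; apply: leq_trans hT; apply: leq_addl].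
apply: (@leq_trans (T * (m + m))).
  by rewrite -mulnS; apply: leq_mul => //; lia.
lia.
Qed.


Lemma lox_dt (K : fieldType) (f : torus_aut K) : loxodromic f ->
  forall N, (0 < N)%N -> dt (ta_mat f ^+ N - 1) != 0.
Proof.
move=> hl N hN; apply/negP => /eqP h0.
have hB : ta_mat f ^+ N \in unitmx by exact: (unitrX N (mat_unit f)).
have [k hk [E [hE1 hE2]]] := unip_exists hB h0.
have hL : (0 < N * k)%N by rewrite muln_gt0 hN.
have hM : ta_mat f ^+ (N * k) = 1 + E by rewrite exprM.
have hb := pow_bound hL hM hE2.
set T := (2 * _)%N in hb.
have hle := @lim_bound (deg_iter f) T.
apply: (Rbar_le_not_lt _ _ _ hl).
apply: hle => m hm.
apply/leP; apply: hb; exact/ltP.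
Qed.

Theorem proposition8p1 (K : closedFieldType) (f g : torus_aut K) :
  loxodromic f -> loxodromic g ->
  ((exists p : K * K, Per f p /\ Per g p) <-> (forall p : K * K, Per f p <-> Per g p)).
Proof.
move=> hf hg; apply: main_alg; exact: lox_dt.
Qed.
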